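(* Let $(X,d)$ be a finite metric space whose distances are integers in $[0,\frac{16k}{\varepsilon}]$, for a positive integer $k$ and $\varepsilon>0$. For a nonempty $S\subseteq X$ and $t\in[k]$, let $(\mathcal{C}_1,\dots,\mathcal{C}_t)$ be the output of $\mathtt{detRecMSD}(S,t)$ and let $\operatorname{opt}_i(S)$ denote the cost of an optimal $i$-clustering of $S$. Then $\operatorname{cost}(\mathcal{C}_r)=\operatorname{opt}_r(S)$ for every $r\in\{1,\dots,t\}$.
   Context: An $i$-clustering of $S$ is a collection of at most $i$ subsets whose union is $S$; its cost is the sum of the diameters $\operatorname{diam}(C)=\max_{p,q\in C}d(p,q)$ of its sets. $\operatorname{Ball}(x,R)=\{z\in X:d(x,z)\le R\}$. The deterministic procedure $\mathtt{detRecMSD}(S,t)$ is: set $\mathcal{C}_i\gets\{S\}$ for all $i\in\{1,\dots,t\}$; if $t=1$ or $|S|=1$ return $(\mathcal{C}_1,\dots,\mathcal{C}_t)$. Otherwise let $x,y\in S$ with $d(x,y)=\operatorname{diam}(S)$; for each integer $R=0,1,\dots,\operatorname{diam}(S)-1$: let $S_1=S\cap\operatorname{Ball}(x,R)$, $S_2=S\setminus\operatorname{Ball}(x,R)$, compute $\mathcal{A}=\mathtt{detRecMSD}(S_1,t-1)$ and $\mathcal{B}=\mathtt{detRecMSD}(S_2,t-1)$, and for all $i,j\in\{1,\dots,t-1\}$ with $i+j\le t$, if $\operatorname{cost}(\mathcal{A}_i\cup\mathcal{B}_j)<\operatorname{cost}(\mathcal{C}_{i+j})$ set $\mathcal{C}_{i+j}\gets\mathcal{A}_i\cup\mathcal{B}_j$.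 Finally return $(\mathcal{C}_1,\dots,\mathcal{C}_t)$. *)

(* Defs.v *)
From mathcomp Require Import all_boot all_order all_algebra.
Set Implicit Arguments. Unset Strict Implicit. Unset Printing Implicit Defensive.

Section MSD.
Variables (X : finType) (d : X -> X -> nat).

Definition is_metric : Prop :=
  [/\ forall x y, d x y = 0 <-> x = y,
      forall x y, d x y = d y x &
      forall x y z, d x z <= d x y + d y z].

Definition diam (C : {set X}) : nat := \max_(p in C) \max_(q in C) d p q.

Definition Ball (x : X) (R : nat) : {set X} := [set z | d x z <= R].

Definition cost (P : {set {set X}}) : nat := \sum_(C in P) diam C.

Definition is_clustering (i : nat) (S : {set X}) (P : {set {set X}}) : bool :=
  (#|P| <= i) && (cover P == S).

(* The default value diam S
   of the fold is the cost of the 1-clustering {S}, hence an upper bound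
   whenever i >= 1, so it does not affect the minimum for i >= 1. *)
Definition opt (i : nat) (S : {set X}) : nat :=
  \big[minn/diam S]_(P : {set {set X}} | is_clustering i S P) cost P.

(* pick S is the point x of the procedure: a point of S that is an endpoint
   of a diametral pair of S.  Any such choice function is allowed. *)
Definition diam_endpoint_choice (pick : {set X} -> X) : Prop :=
  forall S : {set X}, S != set0 ->
    pick S \in S /\ exists2 y, y \in S & d (pick S) y = diam S.

Variable pick : {set X} -> X.

Definition upd (A B C : nat -> {set {set X}}) (ij : nat * nat)
  : nat -> {set {set X}} :=
  let: (i, j) := ij in
  if cost (A i :|: B j) < cost (C (i + j))
  then (fun n => if n == i + j then A i :|: B j else C n)
  else C.

(* detRecMSD(S,t): returns the function i |-> C_i (meaningful for 1<=i<=t). *)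
Fixpoint detRecMSD (S : {set X}) (t : nat) {struct t} : nat -> {set {set X}} :=
  match t with
  | 0 => fun _ => [set S]
  | t'.+1 =>
    if (t' == 0) || (#|S| == 1) then fun _ => [set S]
    else
      let x := pick S in
      foldl
        (fun C R =>
           let S1 := S :&: Ball x R in
           let S2 := S :\: Ball x R in
           let A := detRecMSD S1 t' in
           let B := detRecMSD S2 t' in
           foldl (upd A B) C
             [seq ij <- [seq (i, j) | i <- iota 1 t', j <- iota 1 t']
                | ij.1 + ij.2 <= t'.+1])
        (fun _ => [set S])
        (iota 0 (diam S))
  end.

End MSD.

(* Main.v *)
Require Import Defs.
From mathcomp Require Import all_boot all_order all_algebra.
From mathcomp Require Import zify.
Import Order.TTheory GRing.Theory Num.Theory.

Lemma foldlC (T R : Type) (f : R -> T -> R) z x s :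
  foldl f z (x :: s) = foldl f (f z x) s.
Proof. by []. Qed.

Lemma updE (X : finType) (d : X -> X -> nat) A B C i j n :
  upd d A B C (i, j) n =
  if (cost d (A i :|: B j) < cost d (C (i + j))) && (n == i + j)
  then A i :|: B j else C n.
Proof. by rewrite /upd; case: ifP => //= _; case: ifP => // /eqP ->. Qed.

Lemma foldl_upd_le (X : finType) (d : X -> X -> nat) A B l C n :
  cost d (foldl (upd d A B) C l n) <= cost d (C n).
Proof.
elim: l C => [|[i j] l IH] C //; rewrite foldlC.
apply: leq_trans (IH _) _; rewrite updE; case: ifP => // /andP[lt /eqP->].
exact: ltnW.
Qed.

Lemma foldl_upd_hit (X : finType) (d : X -> X -> nat) A B l C i j :
  (i, j) \in l -> cost d (foldl (upd d A B) C l (i + j)) <= cost d (A i :|: B j).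
Proof.
elim: l C => [|ij l IH] C //; rewrite foldlC inE; case/orP => [/eqP <-|H]; last exact: IH.
apply: leq_trans (foldl_upd_le _ _ _ _ _ _ _) _.
by rewrite updE eqxx andbT; case: ifP => // /negbT; rewrite -leqNgt.
Qed.

Lemma foldl_upd_inv (X : finType) (d : X -> X -> nat) A B l C
  (Q : nat -> {set {set X}} -> Prop) :
  (forall n, Q n (C n)) ->
  (forall i j, (i, j) \in l -> Q (i + j) (A i :|: B j)) ->
  forall n, Q n (foldl (upd d A B) C l n).
Proof.
elim: l C => [|[i j] l IH] C HC Hl //; rewrite foldlC; apply: IH => [n|i' j' H]; last first.
  by apply: Hl; rewrite inE H orbT.
rewrite updE; case: ifP => // /andP[_ /eqP ->]; apply: Hl; exact: mem_head.
Qed.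

Definition outer {X : finType} (d : X -> X -> nat) (AR BR : nat -> nat -> {set {set X}})
  L C rs := foldl (fun C R => foldl (upd d (AR R) (BR R)) C L) C rs.

Lemma outer_le (X : finType) d AR BR L rs C n :
  cost d (@outer X d AR BR L C rs n) <= cost d (C n).
Proof.
rewrite /outer; elim: rs C => [|R rs IH] C //; rewrite foldlC.
exact: leq_trans (IH _) (foldl_upd_le _ _ _ _ _ _ _).
Qed.

Lemma outer_hit (X : finType) d AR BR L rs C R i j :
  R \in rs -> (i, j) \in L ->
  cost d (@outer X d AR BR L C rs (i + j)) <= cost d (AR R i :|: BR R j).
Proof.
rewrite /outer; elim: rs C => [|R' rs IH] C //; rewrite foldlC inE.
case/orP => [/eqP <-|H] HL; last exact: IH.
apply: leq_trans (outer_le _ _ _ _ _ _ _ _) _. exact: foldl_upd_hit.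
Qed.

Lemma outer_inv (X : finType) d AR BR L rs C (Q : nat -> {set {set X}} -> Prop) :
  (forall n, Q n (C n)) ->
  (forall R i j, R \in rs -> (i, j) \in L -> Q (i + j) (AR R i :|: BR R j)) ->
  forall n, Q n (@outer X d AR BR L C rs n).
Proof.
rewrite /outer; elim: rs C => [|R rs IH] C HC H //; rewrite foldlC; apply: IH => [n|R' i j HR HL].
  apply: foldl_upd_inv => // i j HL; apply: H HL; exact: mem_head.
by apply: H HL; rewrite inE HR orbT.
Qed.

Lemma diam_ge (X : finType) (d : X -> X -> nat) (C : {set X}) p q :
  p \in C -> q \in C -> d p q <= diam d C.
Proof.
move=> pC qC; rewrite /diam.
apply: leq_trans (leq_bigmax_cond _ pC); exact: (leq_bigmax_cond _ qC).
Qed.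

Lemma diam1 (X : finType) (d : X -> X -> nat) p :
  d p p = 0 -> diam d [set p] = 0.
Proof. by move=> H; rewrite /diam !big_set1. Qed.

Lemma sum_sub (X : finType) (F : X -> nat) (A B : {set X}) :
  A \subset B -> \sum_(i in A) F i <= \sum_(i in B) F i.
Proof.
move=> sAB; rewrite [X in _ <= X](big_setID A) /= (setIidPr sAB); exact: leq_addr.
Qed.

Lemma cost_setU (X : finType) (d : X -> X -> nat) A B :
  cost d (A :|: B) <= cost d A + cost d B.
Proof.
rewrite /cost (big_setID A) /= setUK leq_add2l; apply: sum_sub.
by apply/subsetP => z; rewrite !inE => /andP[/negbTE -> /=].
Qed.

Lemma cost1 (X : finType) (d : X -> X -> nat) S : cost d [set S] = diam d S.
Proof. by rewrite /cost big_set1. Qed.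

Lemma cost_mem (X : finType) (d : X -> X -> nat) (P : {set {set X}}) C :
  C \in P -> diam d C <= cost d P.
Proof. by move=> CP; rewrite /cost (bigD1 C) //= leq_addr. Qed.

Lemma bigmin_le_seq (I : eqType) (s : seq I) (P : pred I) (F : I -> nat) a j :
  j \in s -> P j -> \big[minn/a]_(i <- s | P i) F i <= F j.
Proof.
elim: s => // x s IH; rewrite inE big_cons; case/orP => [/eqP <-|js] Pj.
  by rewrite Pj geq_minl.
case: (P x); last exact: IH.
exact: leq_trans (geq_minr _ _) (IH js Pj).
Qed.

Lemma opt_le (X : finType) (d : X -> X -> nat) i S P :
  is_clustering i S P -> opt d i S <= cost d P.
Proof.
move=> H; rewrite /opt; apply: bigmin_le_seq => //.
Qed.

Lemma opt_ge (X : finType) (d : X -> X -> nat) i S c :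
  c <= diam d S -> (forall P, is_clustering i S P -> c <= cost d P) ->
  c <= opt d i S.
Proof.
move=> H1 H2; rewrite /opt; apply: (big_ind (fun v => c <= v)) => //.
by move=> x y hx hy; rewrite leq_min hx hy.
Qed.

Lemma coverU (X : finType) (A B : {set {set X}}) : cover (A :|: B) = cover A :|: cover B.
Proof. by rewrite /cover bigcup_setU. Qed.

Lemma clusteringU (X : finType) i j S1 S2 (A B : {set {set X}}) :
  is_clustering i S1 A -> is_clustering j S2 B ->
  is_clustering (i + j) (S1 :|: S2) (A :|: B).
Proof.
case/andP => cA /eqP eA; case/andP => cB /eqP eB; apply/andP; split.
  by rewrite cardsU (leq_trans (leq_subr _ _)) // leq_add.
by rewrite coverU eA eB.
Qed.

Lemma card_bigcup (I T : finType) (r : seq I) (P : pred I) (F : I -> {set T}) :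
  #|\bigcup_(i <- r | P i) F i| <= \sum_(i <- r | P i) #|F i|.
Proof.
elim: r => [|i r IH]; first by rewrite !big_nil cards0.
rewrite !big_cons; case: (P i) => //.
by rewrite cardsU (leq_trans (leq_subr _ _)) // leq_add.
Qed.

Lemma good_R (X : finType) (d : X -> X -> nat) x (P : {set {set X}}) D :
  (forall a b c, d a c <= d a b + d b c) ->
  cost d P < D ->
  exists2 R, R < D & forall C p q, C \in P -> p \in C -> q \in C ->
     d x p <= R -> d x q <= R.
Proof.
move=> tri hc.
pose B (C : {set X}) : {set 'I_D} :=
  [set R : 'I_D | [exists p in C, exists q in C, (d x p <= R) && (R < d x q)]].
have cardB C : #|B C| <= diam d C.
  case: (set_0Vmem (B C)) => [->|[R0]]; first by rewrite cards0.
  rewrite inE => /existsP[p0 /andP[p0C _]].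
  case: (arg_minnP (fun p => d x p) p0C) => pm pmC pmin.
  case: (arg_maxnP (fun p => d x p) p0C) => pM pMC pmax.
  apply: (@leq_trans (d x pM - d x pm)); last first.
    by rewrite leq_subLR; apply: leq_trans (tri x pm pM) _; rewrite leq_add2l diam_ge.
  rewrite cardE -(size_map val) -(size_iota (d x pm) (d x pM - d x pm)).
  apply: uniq_leq_size; first by rewrite map_inj_uniq ?enum_uniq //; exact: val_inj.
  move=> n /mapP[R]; rewrite mem_enum inE => /existsP[p /andP[pC]].
  move=> /existsP[q /andP[qC /andP[h1 h2]]] ->.
  rewrite mem_iota (leq_trans (pmin p pC) h1) /= subnKC.
    exact: leq_trans h2 (pmax q qC).
  exact: leq_trans (pmin p pC) (leq_trans h1 (ltnW (leq_trans h2 (pmax q qC)))).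
have : ~~ ([set: 'I_D] \subset \bigcup_(C in P) B C).
  apply/negP => /subset_leq_card; rewrite cardsT card_ord => h.
  have := leq_trans h (card_bigcup _ _ _ _ _); rewrite leqNgt => /negP; apply.
  apply: leq_ltn_trans hc; rewrite /cost; exact: leq_sum.
case/subsetPn => R _ HR; exists R; first exact: ltn_ord.
move=> C p q CP pC qC hp; rewrite leqNgt; apply/negP => hq.
suff: R \in \bigcup_(C in P) B C by rewrite (negbTE HR).
apply/bigcupP; exists C => //; rewrite inE.
apply/existsP; exists p; rewrite pC /=; apply/existsP; exists q; by rewrite qC hp hq.
Qed.

Definition Lst t := [seq ij <- [seq (i, j) | i <- iota 1 t, j <- iota 1 t] | ij.1 + ij.2 <= t.+1].

Lemma detRecE (X : finType) (d : X -> X -> nat) (pick : {set X} -> X) S t :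
  detRecMSD d pick S t.+1 =
  if (t == 0) || (#|S| == 1) then (fun _ => [set S])
  else outer d (fun R => detRecMSD d pick (S :&: Ball d (pick S) R) t)
               (fun R => detRecMSD d pick (S :\: Ball d (pick S) R) t)
               (Lst t) (fun _ => [set S]) (iota 0 (diam d S)).
Proof. by []. Qed.

Lemma memL t i j : ((i, j) \in Lst t) = [&& 0 < i <= t, 0 < j <= t & i + j <= t.+1].
Proof.
rewrite /Lst mem_filter /=; apply/andP/and3P.
  case=> h /allpairsP[[a b] /= [ha hb [ea eb]]].
  move: ha hb h; rewrite ea eb !mem_iota => ha hb h; split; lia.
case=> hi hj h; split => //; apply: allpairs_f; rewrite mem_iota; lia.
Qed.

Lemma cover_set0 (X : finType) : cover (set0 : {set {set X}}) = set0.
Proof. by rewrite /cover big_set0. Qed.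

Lemma main (X : finType) (d : X -> X -> nat) (pick : {set X} -> X) :
  is_metric d -> diam_endpoint_choice d pick ->
  forall t S, S != set0 -> forall r, 0 < r <= t ->
   [/\ is_clustering r S (detRecMSD d pick S t r),
       cost d (detRecMSD d pick S t r) <= diam d S &
       forall P, is_clustering r S P -> cost d (detRecMSD d pick S t r) <= cost d P].
Proof.
move=> [hd0 hsym htri] hpick.
have dxx : forall x, d x x = 0 by move=> x; apply/hd0.
have clS : forall S n, 0 < n -> is_clustering n S [set S].
  by move=> S n n0; rewrite /is_clustering cards1 cover1 eqxx andbT.
elim=> [|t IH] S S0 r /andP[r0 rt]; first by move: (leq_trans r0 rt).
rewrite detRecE; case: ifP => Hb.
  split; [exact: clS | by rewrite cost1 |].
  move=> P /andP[cP /eqP eP]; rewrite cost1.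
  case/orP: Hb => [/eqP t0 | /cards1P [p ->]]; last by rewrite diam1.
  have P0 : P != set0 by apply/eqP => P0; move: S0; rewrite -eP P0 cover_set0 eqxx.
  have /cards1P [C PC] : #|P| == 1 by rewrite eqn_leq card_gt0 P0 andbT; lia.
  by move: eP; rewrite PC cover1 => ->; rewrite cost1.
move/negbT: Hb; rewrite negb_or => /andP[t0 S1n].
set x := pick S; have [xS [y yS dxy]] := hpick S S0; rewrite -/x in xS dxy.
have S1ne : forall R, S :&: Ball d x R != set0.
  by move=> R; apply/set0Pn; exists x; rewrite !inE xS dxx.
have S2ne : forall R, R < diam d S -> S :\: Ball d x R != set0.
  by move=> R hR; apply/set0Pn; exists y; rewrite !inE yS dxy -ltnNge hR.
set C := outer _ _ _ _ _ _.
have hb : cost d (C r) <= diam d S.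
  by apply: leq_trans (outer_le _ _ _ _ _ _ _ _) _; rewrite cost1.
split => //.
  pose Q n Cn := 0 < n -> is_clustering n S Cn.
  suff : Q r (C r) by apply.
  apply: outer_inv => [n|R i j]; first exact: clS.
  rewrite mem_iota memL => hR /and3P[hi hj _] _.
  have [c1 _ _] := IH _ (S1ne R) _ hi.
  have [c2 _ _] := IH _ (S2ne R ltac:(lia)) _ hj.
  by have := @clusteringU _ _ _ _ _ _ _ c1 c2; rewrite setID.
move=> P /andP[cP /eqP eP].
case: (leqP (diam d S) (cost d P)) => hPS; first exact: leq_trans hb hPS.
have [R hR Hnc] := @good_R _ d x P _ htri hPS.
pose Q := [set C : {set X} | C \subset Ball d x R].
pose P1 := P :&: Q; pose P2 := P :\: Q.
have cP1 : cover P1 = S :&: Ball d x R.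
  apply/setP => z; apply/bigcupP/setIP => [[D] | [zS zB]].
    rewrite !inE => /andP[DP /subsetP DB] zD; split; last by have := DB z zD; rewrite inE.
    by rewrite -eP; apply/bigcupP; exists D.
  move: zS; rewrite -eP => /bigcupP[D DP zD]; exists D => //.
  rewrite !inE DP /=; apply/subsetP => q qD; rewrite inE.
  by apply: (Hnc D z q) => //; move: zB; rewrite inE.
have cP2 : cover P2 = S :\: Ball d x R.
  apply/setP => z; apply/bigcupP/setDP => [[D] | [zS zB]].
    rewrite !inE => /andP[/subsetPn [q qD qB] DP] zD; split.
      by rewrite -eP; apply/bigcupP; exists D.
    apply/negP => hz; move: qB; rewrite inE (Hnc D z q DP zD qD hz).
    by [].
  move: zS; rewrite -eP => /bigcupP[D DP zD]; exists D => //.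
  by rewrite !inE DP andbT; apply/subsetPn; exists z.
have hcard : #|P1| + #|P2| = #|P| by rewrite cardsID.
have p1 : 0 < #|P1|.
  by rewrite card_gt0; apply/eqP => e; move: (S1ne R); rewrite -cP1 e cover_set0 eqxx.
have p2 : 0 < #|P2|.
  by rewrite card_gt0; apply/eqP => e; move: (S2ne R hR); rewrite -cP2 e cover_set0 eqxx.
have hi : 0 < r - #|P2| <= t by lia.
have hj : 0 < #|P2| <= t by lia.
have [_ _ H1] := IH _ (S1ne R) _ hi.
have [_ _ H2] := IH _ (S2ne R hR) _ hj.
have h1 := H1 P1 ltac:(by rewrite /is_clustering cP1 eqxx andbT; lia).
have h2 := H2 P2 ltac:(by rewrite /is_clustering cP2 eqxx andbT; lia).
have hL : (r - #|P2|, #|P2|) \in Lst t by rewrite memL; lia.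
have hRi : R \in iota 0 (diam d S) by rewrite mem_iota.
have := @outer_hit _ d (fun R => detRecMSD d pick (S :&: Ball d (pick S) R) t)
               (fun R => detRecMSD d pick (S :\: Ball d (pick S) R) t)
               _ _ (fun _ => [set S]) _ _ _ hRi hL.
rewrite subnK; last by lia.
move=> h; apply: (leq_trans h); apply: (leq_trans (cost_setU _ _ _ _)).
by rewrite /cost [X in _ <= X](big_setID Q) leq_add.
Qed.

Theorem lemma5 (F : realFieldType) (X : finType) (d : X -> X -> nat)
    (k : nat) (eps : F) (pick : {set X} -> X) :
  is_metric d ->
  (0 < k)%N -> (0 < eps)%R ->
  (forall x y : X, ((d x y)%:R <= 16%:R * k%:R / eps)%R) ->
  diam_endpoint_choice d pick ->
  forall (S : {set X}) (t : nat),
    S != set0 -> (1 <= t <= k)%N ->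
    forall r : nat, (1 <= r <= t)%N ->
      cost d (detRecMSD d pick S t r) = opt d r S.
Proof.
move=> hm _ _ _ hp S t S0 _ r hr.
have [c1 c2 c3] := @main _ _ _ hm hp t S S0 r hr.
apply/eqP; rewrite eqn_leq; apply/andP; split; last exact: opt_le.
exact: opt_ge.
Qed.
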